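(* Let $D$ be a strongly connected digraph with $n$ vertices and exactly three complementarity eigenvalues. If $D$ contains a subdigraph isomorphic to the $\infty$-digraph $\infty(r,s)$, then $n=r+s-1$.
   Context: All digraphs are finite, without loops and without multiple arcs. For a digraph $D$ with adjacency matrix $A$ (on $n$ vertices), a real $\lambda$ is a complementarity eigenvalue if there is a nonzero $x\in\mathbb{R}^n$, $x\ge0$, with $Ax-\lambda x\ge 0$ and $\langle x,Ax-\lambda x\rangle=0$. Subdigraphs need not be induced. For $r,s\ge 2$, $\infty(r,s)$ is the digraph obtained from a directed cycle $\vec C_r$ and a directed cycle $\vec C_s$ by identifying one vertex of the first with one vertex of the second (so the two cycles share exactly one vertex). *)

(* Defs.v *)
From HB Require Import structures.
From mathcomp Require Import all_boot all_order all_algebra.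
From mathcomp Require Import reals.
Set Implicit Arguments. Unset Strict Implicit. Unset Printing Implicit Defensive.
Import Order.TTheory GRing.Theory Num.Theory.
Local Open Scope ring_scope.

(* A digraph on n vertices is an arc relation e : rel 'I_n
   (no multiple arcs by construction; loops excluded by a hypothesis). *)

Definition adjmx (R : realType) (n : nat) (e : rel 'I_n) : 'M[R]_n :=
  \matrix_(i, j) (e i j)%:R.

Definition compl_eig (R : realType) (n : nat) (A : 'M[R]_n) (lambda : R) : Prop :=
  exists x : 'cV[R]_n,
    [/\ x != 0,
        (forall i, 0 <= x i 0),
        (forall i, 0 <= (A *m x - lambda *: x) i 0) &
        \sum_i x i 0 * (A *m x - lambda *: x) i 0 = 0].

Definition strongly_connected (n : nat) (e : rel 'I_n) : Prop :=
  forall i j, connect e i j.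

(* The infinity digraph infty(r,s) on vertices 0..r+s-2 (shared vertex 0):
   first cycle  0 -> 1 -> ... -> r-1 -> 0,
   second cycle 0 -> r -> r+1 -> ... -> r+s-2 -> 0. *)
Definition infty_arc (r s : nat) (u v : nat) : bool :=
  [|| (u.+1 == v) && (v < r)%N,
      (u == r.-1) && (v == 0%N),
      (u == 0%N) && (v == r),
      [&& (r <= u)%N, u.+1 == v & (v <= r + s - 2)%N]
    | (u == r + s - 2)%N && (v == 0%N)].

Definition infty_digraph (r s : nat) : rel 'I_(r + s - 1) :=
  fun u v => infty_arc r s u v.

(* D contains a (not necessarily induced) subdigraph isomorphic to F:
   an injective vertex map sending arcs of F to arcs of D. *)
Definition contains_subdigraph (m n : nat) (F : rel 'I_m) (e : rel 'I_n) : Prop :=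
  exists f : 'I_m -> 'I_n, injective f /\ forall u v, F u v -> e (f u) (f v).
Arguments infty_digraph : clear implicits.

(* Main.v *)
Require Import Defs.
From HB Require Import structures.
From mathcomp Require Import all_boot all_order all_algebra.
From mathcomp Require Import reals.
From mathcomp Require Import ring lra zify.
Import Order.TTheory GRing.Theory Num.Theory.
Local Open Scope ring_scope.

Section Alg.
Variables (R : realType) (n : nat) (e : rel 'I_n).

Definition Ax (x : 'I_n -> R) i := \sum_j (e i j)%:R * x j.

Lemma Ax_ge0 x : (forall j, 0 <= x j) -> forall i, 0 <= Ax x i.
Proof.
move=> x0 i; apply: sumr_ge0 => j _; apply: mulr_ge0 => //; exact: ler0n.
Qed.

Definition feas (P : pred 'I_n) (mu : R) (x : 'I_n -> R) :=
  [/\ forall i, 0 <= x i, forall i, ~~ P i -> x i = 0, exists k, 0 < x k &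
      forall i, P i -> mu * x i <= Ax x i].

Definition eig (P : pred 'I_n) (lam : R) (x : 'I_n -> R) :=
  [/\ forall i, 0 <= x i, forall i, ~~ P i -> x i = 0, exists k, 0 < x k &
      forall i, P i -> Ax x i = lam * x i].

Definition cutc (P : pred 'I_n) := forall Q : pred 'I_n,
  (exists i, P i && Q i) -> (exists k, P k && ~~ Q k) ->
  exists j i, [&& P j, ~~ Q j, P i, Q i & e j i].

Lemma exists_pos_lb (P : pred 'I_n) (h : 'I_n -> R) :
  (forall i, P i -> 0 < h i) -> exists2 d, 0 < d & forall i, P i -> d <= h i.
Proof.
move=> hp; exists (\big[Num.min/1]_(i | P i) h i).
  by elim/big_ind: _ => [|a b a0 b0|i Pi]; [exact: ltr01|rewrite lt_min a0 b0 | exact: hp].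
move=> i Pi; rewrite (bigD1 i) //= ge_min lexx //.
Qed.

Lemma allstrict P mu x : feas P mu x -> (forall i, P i -> mu * x i < Ax x i) ->
  exists2 mu', mu < mu' & exists y, feas P mu' y.
Proof.
move=> [x0 xs xk xf] hs.
have [|d d0 hd] := @exists_pos_lb P (fun i => (Ax x i - mu * x i) / (1 + x i)).
  move=> i Pi; apply: divr_gt0; first by rewrite subr_gt0 hs.
  by have := x0 i; lra.
exists (mu + d); first by lra.
exists x; split=> // i Pi.
have := hd i Pi; rewrite ler_pdivlMr; last by have := x0 i; lra.
have := x0 i; nra.
Qed.

Lemma improve P mu x : cutc P -> feas P mu x ->
  (exists i, P i && (mu * x i < Ax x i)) ->
  exists2 mu', mu < mu' & exists y, feas P mu' y.
Proof.
move=> cP.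
suff H : forall m x, leq #|[pred i | P i && ~~ (mu * x i < Ax x i)]| m ->
  feas P mu x -> (exists i, P i && (mu * x i < Ax x i)) ->
  exists2 mu', mu < mu' & exists y, feas P mu' y.
  by move=> fx hs; exact: (H _ x (leqnn _)).
elim=> [|m IH] {}x hm fx hs.
  apply: (@allstrict P mu x fx) => i Pi; apply: contraTT hm => ns.
  by rewrite -ltnNge; apply/card_gt0P; exists i; rewrite inE Pi.
have [nt|[k /andP[Pk nk]]] : (forall k, P k -> mu * x k < Ax x k) \/
    exists k, P k && ~~ (mu * x k < Ax x k).
    case: (boolP [exists k, P k && ~~ (mu * x k < Ax x k)]) => [/existsP h|];
      [by right|].
    rewrite negb_exists => /forallP h; left => k Pk; have := h k.
    by rewrite Pk /= negbK.
  exact: (@allstrict P mu x fx nt).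
have [j [i /and5P[Pj nQj Pi Qi eji]]] : exists j i,
   [&& P j, ~~ (mu * x j < Ax x j), P i, (mu * x i < Ax x i) & e j i].
  by apply: cP => //; exists k; rewrite Pk.
have fx' := fx; case: fx' => x0 xs [k0 xk0] xf.
set g := Ax x i - mu * x i.
have g0 : 0 < g by rewrite subr_gt0.
have n1 : 0 < `|mu| + 1 by have := normr_ge0 mu; lra.
set eps := g / (`|mu| + 1).
have eps0 : 0 < eps by apply: divr_gt0.
have epsE : eps * (`|mu| + 1) = g by rewrite /eps divfK // gt_eqF.
have hmueps : mu * eps < g.
  have := ler_norm mu; nra.
pose y l := x l + (if l == i then eps else 0).
have Ay : forall l, Ax y l = Ax x l + (e l i)%:R * eps.
  move=> l; rewrite /Ax /y.
  under eq_bigr do rewrite mulrDr.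
  rewrite big_split /=; congr (_ + _).
  rewrite (bigD1 i) //= eqxx big1 ?addr0 // => l' /negbTE ->.
  by rewrite mulr0.
have ei0 : forall l, 0 <= (e l i)%:R * eps :> R.
  by move=> l; apply: mulr_ge0; [exact: ler0n | exact: ltW].
have pres : forall l, P l -> mu * x l < Ax x l -> mu * y l < Ax y l.
  move=> l Pl; rewrite Ay /y; case: eqP => [->|_] h.
    have := ei0 i; rewrite /g in hmueps; nra.
  by have := ei0 l; rewrite addr0; lra.
have jni : j != i by apply: contraNneq nQj => ->.
have strj : mu * y j < Ax y j.
  rewrite Ay /y (negbTE jni) addr0 eji mul1r.
  by have := xf j Pj; lra.
have fy : feas P mu y.
  split.
  - by move=> l; rewrite /y; have := x0 l; case: eqP => _; lra.
  - move=> l Pl; rewrite /y xs //; case: eqP => [el|_]; last by rewrite addr0.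
    by move: Pl; rewrite el Pi.
  - by exists k0; rewrite /y; case: eqP => _; lra.
  - move=> l Pl; have [hl|hl] := boolP (mu * x l < Ax x l).
      exact/ltW/pres.
    move: (xf l Pl); rewrite Ay /y; case: eqP => [el|_].
      by move: hl; rewrite el Qi.
    by have := ei0 l; rewrite addr0; lra.
apply: (IH y) => //; last by exists i; rewrite Pi pres.
have : leq (#|[pred l | P l && ~~ (mu * y l < Ax y l)]|).+1
       #|[pred l | P l && ~~ (mu * x l < Ax x l)]|.
  apply: proper_card; apply/properP; split.
    apply/subsetP => l; rewrite !inE => /andP[Pl nl]; rewrite Pl /=.
    by apply: contra nl; exact: pres.
  by exists j; rewrite !inE ?Pj ?nQj //= strj.
move=> lt; rewrite -ltnS; exact: leq_trans lt hm.
Qed.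

Lemma step_up (P Q : pred 'I_n) lam x : (forall i, P i -> Q i) -> cutc Q ->
  (exists q, Q q && ~~ P q) ->
  eig P lam x -> feas Q lam x /\ exists i, Q i && (lam * x i < Ax x i).
Proof.
move=> PQ cQ [q /andP[Qq nPq]] [x0 xs [k xk] xe].
split.
  split => // [i nQi | | i Qi]; first by apply: xs; apply: contra nQi; exact: PQ.
    by exists k.
  have [Pi|nPi] := boolP (P i); first by rewrite xe.
  by rewrite xs // mulr0; exact: Ax_ge0.
have [j [i /and5P[Qj nj Qi xi eji]]] : exists j i,
    [&& Q j, ~~ (0 < x j), Q i, 0 < x i & e j i].
  apply: cQ.
    exists k; rewrite xk andbT; apply: PQ; apply: contraTT xk => /xs ->.
    by rewrite ltxx.
  by exists q; rewrite Qq /= xs // ltxx.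
exists j; rewrite Qj /=.
have xj : x j = 0 by apply/le_anti; rewrite x0 andbT leNgt.
rewrite xj mulr0 /Ax (bigD1 i) //= eji mul1r.
apply: (lt_le_trans xi); rewrite lerDl; apply: sumr_ge0 => l _.
by apply: mulr_ge0 => //; exact: ler0n.
Qed.

Lemma eig_compl P lam x : eig P lam x -> compl_eig (adjmx R e) lam.
Proof.
move=> [x0 xs [k xk] xe].
have hA : forall i, (adjmx R e *m \col_j x j - lam *: \col_j x j) i 0 =
    Ax x i - lam * x i.
  move=> i; rewrite !mxE /Ax; congr (_ - _).
  by apply: eq_bigr => j _; rewrite !mxE.
exists (\col_j x j); split.
- apply/eqP => /matrixP/(_ k 0); rewrite !mxE => xk0.
  by rewrite xk0 ltxx in xk.
- by move=> i; rewrite mxE.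
- move=> i; rewrite hA; have [Pi|nPi] := boolP (P i).
    by rewrite xe // subrr.
  by rewrite xs // mulr0 subr0; exact: Ax_ge0.
- apply: big1 => i _; rewrite hA mxE; have [Pi|nPi] := boolP (P i).
    by rewrite xe // subrr mulr0.
  by rewrite xs // mul0r.
Qed.

Lemma cut_path (Q : pred 'I_n) k i : connect e k i -> ~~ Q k -> Q i ->
  exists j l, [&& ~~ Q j, Q l & e j l].
Proof.
move/connectP=> [p pth ->]; elim: p k pth => [|a p IH] k /=.
  by move=> _ /negbTE ->.
case/andP => eka pth nQk Qlast; have [Qa|nQa] := boolP (Q a).
  by exists k, a; rewrite nQk Qa eka.
exact: IH pth nQa Qlast.
Qed.

Lemma cut_all : strongly_connected e -> cutc predT.
Proof.
move=> sc Q [i /andP[_ Qi]] [k /andP[_ nQk]].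
have [j [l /and3P[a b c]]] := @cut_path Q k i (sc k i) nQk Qi.
by exists j, l; rewrite a b c.
Qed.

Lemma cut_1 v : cutc (pred1 v).
Proof.
move=> Q [i /andP[/eqP-> Qv]] [k /andP[/eqP-> nQ]].
by rewrite Qv in nQ.
Qed.

Lemma cut_img (r s : nat) (f : 'I_(r+s-1) -> 'I_n) (S : nat -> bool) :
  (forall u v : 'I_(r+s-1), infty_digraph r s u v -> e (f u) (f v)) ->
  (forall Q : nat -> Prop, (forall a b, (a < r+s-1)%N -> (b < r+s-1)%N ->
      S a -> S b -> infty_arc r s a b -> Q b -> Q a) ->
     forall u, (u < r+s-1)%N -> S u -> Q u ->
     forall t, (t < r+s-1)%N -> S t -> Q t) ->
  cutc [pred v | [exists u : 'I_(r+s-1), S u && (f u == v)]].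
Proof.
move=> hom hcl Q [i /andP[/existsP[u0 /andP[Su0 /eqP fu0]] Qi]]
  [k /andP[/existsP[u1 /andP[Su1 /eqP fu1]] nQk]].
case: (boolP [exists j, exists l, [&& [exists u : 'I_(r+s-1), S u && (f u == j)], ~~ Q j,
   [exists u : 'I_(r+s-1), S u && (f u == l)], Q l & e j l]]).
  by move=> /existsP[j /existsP[l h]]; exists j, l.
move=> /negP nc; exfalso.
pose Q' t := exists u : 'I_(r+s-1), val u = t /\ Q (f u).
have H1 : forall a b, (a < r+s-1)%N -> (b < r+s-1)%N ->
      S a -> S b -> infty_arc r s a b -> Q' b -> Q' a.
  move=> a b aN bN Sa Sb ab [u [uv Qu]].
  exists (Ordinal aN); split => //.
  apply/negPn/negP => nQw; apply: nc; apply/existsP; exists (f (Ordinal aN)).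
  apply/existsP; exists (f u); rewrite nQw Qu /=.
  apply/and3P; split.
  - by apply/existsP; exists (Ordinal aN); rewrite Sa eqxx.
  - by apply/existsP; exists u; rewrite uv Sb eqxx.
  - by apply: hom; rewrite /infty_digraph /= uv.
have H2 : Q' u0 by exists u0; split => //; rewrite fu0.
have [u [/val_inj uu1 Qu]] := hcl Q' H1 u0 (ltn_ord u0) Su0 H2 u1 (ltn_ord u1) Su1.
by move: Qu; rewrite uu1 fu1 (negbTE nQk).
Qed.

End Alg.

Lemma down_closed (Q : nat -> Prop) lo m :
  (forall t, (lo <= t)%N -> (t.+1 <= m)%N -> Q t.+1 -> Q t) ->
  forall u, (u <= m)%N -> Q u -> forall t, (lo <= t)%N -> (t <= u)%N -> Q t.
Proof.
move=> H; elim=> [|u IH] um Qu t lot tu.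
  by have -> : t = 0%N by lia.
have [->//|ne] := eqVneq t u.+1.
apply: IH; [lia| |lia|lia].
apply: H => //; lia.
Qed.

Lemma cyc_closed (r s : nat) (Q : nat -> Prop) : (2 <= r)%N -> (2 <= s)%N ->
  (forall a b, (a < r+s-1)%N -> (b < r+s-1)%N -> (a < r)%N -> (b < r)%N ->
     infty_arc r s a b -> Q b -> Q a) ->
  forall u, (u < r+s-1)%N -> (u < r)%N -> Q u ->
  forall t, (t < r+s-1)%N -> (t < r)%N -> Q t.
Proof.
move=> r2 s2 H u _ ur Qu.
have step : forall t, (0 <= t)%N -> (t.+1 <= r.-1)%N -> Q t.+1 -> Q t.
  move=> t _ tr; apply: H; [lia|lia|lia|lia|].
  by apply/orP; left; rewrite eqxx /=; lia.
have Q0 : Q 0%N.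
  by apply: (@down_closed _ _ _ step u) => //; lia.
have Qr : Q r.-1.
  apply: H Q0; [lia|lia|lia|lia|].
  by apply/orP; right; apply/orP; left; rewrite !eqxx.
move=> t _ tr; apply: (@down_closed _ _ _ step r.-1) => //; lia.
Qed.

Lemma inf_closed (r s : nat) (Q : nat -> Prop) : (2 <= r)%N -> (2 <= s)%N ->
  (forall a b, (a < r+s-1)%N -> (b < r+s-1)%N -> true -> true ->
     infty_arc r s a b -> Q b -> Q a) ->
  forall u, (u < r+s-1)%N -> true -> Q u ->
  forall t, (t < r+s-1)%N -> true -> Q t.
Proof.
move=> r2 s2 H u uN _ Qu.
have step1 : forall t, (0 <= t)%N -> (t.+1 <= r.-1)%N -> Q t.+1 -> Q t.
  move=> t _ tr; apply: H => //; [lia|lia|].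
  by apply/orP; left; rewrite eqxx /=; lia.
have step2 : forall t, (r <= t)%N -> (t.+1 <= r + s - 2)%N -> Q t.+1 -> Q t.
  move=> t rt tr; apply: H => //; [lia|lia|].
  apply/orP; right; apply/orP; right; apply/orP; right; apply/orP; left.
  by rewrite eqxx rt tr.
have Q0 : Q 0%N.
  have [ur|ur] := ltnP u r.
    by apply: (@down_closed _ _ _ step1 u) => //; lia.
  have Qr : Q r by apply: (@down_closed _ _ _ step2 u) => //; lia.
  apply: H Qr => //; [lia|lia|].
  by apply/orP; right; apply/orP; right; apply/orP; left; rewrite !eqxx.
have Qr1 : Q r.-1.
  apply: H Q0 => //; [lia|lia|].
  by apply/orP; right; apply/orP; left; rewrite !eqxx.
have Qrs : Q (r + s - 2)%N.
  apply: H Q0 => //; [lia|lia|].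
  by apply/orP; right; apply/orP; right; apply/orP; right; apply/orP; right;
    rewrite !eqxx.
move=> t tN _; have [tr|tr] := ltnP t r.
  by apply: (@down_closed _ _ _ step1 r.-1) => //; lia.
by apply: (@down_closed _ _ _ step2 (r + s - 2)%N) => //; lia.
Qed.


From mathcomp Require Import finmap boolp classical_sets functions topology normedtype.
Import numFieldNormedType.Exports.
Local Open Scope classical_set_scope.
Local Open Scope ring_scope.

Section Topo.
Variables (R : realType) (n : nat) (e : rel 'I_n).
Local Notation Ax := (@Ax R n e).
Local Notation feas := (@feas R n e).
Local Notation eig := (@eig R n e).
Local Notation cutc := (@cutc n e).

Lemma cont_lin (c : 'I_n -> R) :
  continuous (fun v : 'rV[R]_n => \sum_j c j * v ord0 j).
Proof.
suff H : forall s : seq 'I_n,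
    continuous (fun v : 'rV[R]_n => \sum_(j <- s) c j * v ord0 j) by exact: H.
elim=> [|a s IH].
  have -> : (fun v : 'rV[R]_n => \sum_(j <- [::]) c j * v ord0 j) = fun=> 0.
    by apply/funext => v; rewrite big_nil.
  exact: cst_continuous.
have -> : (fun v : 'rV[R]_n => \sum_(j <- a :: s) c j * v ord0 j) =
   (fun v : 'rV[R]_n => c a * v ord0 a) + (fun v : 'rV[R]_n => \sum_(j <- s) c j * v ord0 j).
  by apply/funext => v; rewrite big_cons.
move=> v; apply: continuousD; last exact: IH.
apply: continuousM; [exact: cst_continuous | exact: coord_continuous].
Qed.

Lemma seq_max (L : R) (s : seq R) : (forall x, x \in s -> x < L) ->
  exists2 m, m < L & forall x, x \in s -> x <= m.
Proof.
elim: s => [|a s IH] H; first by exists (L - 1) => //; lra.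
have [|m mL mge] := IH.
  by move=> x xs; apply: H; rewrite in_cons xs orbT.
exists (Num.max a m); first by rewrite gt_max H ?mem_head.
move=> x; rewrite in_cons => /orP[/eqP->|xs]; first by rewrite le_max lexx.
by rewrite le_max mge ?orbT.
Qed.

Lemma lim_le (L a b : R) : 0 <= a -> 0 <= b ->
  (forall mu, mu < L -> mu * a <= b) -> L * a <= b.
Proof.
move=> a0 b0 H; rewrite leNgt; apply/negP => hlt.
have [a00|ane] := eqVneq a 0.
  by move: hlt; rewrite a00 mulr0 ltNge b0.
have apos : 0 < a by rewrite lt_def ane a0.
set d := L * a - b.
have d0 : 0 < d by rewrite subr_gt0.
have E : d / (2 * a) * a = d / 2 by field; rewrite ane.
have q0 : 0 < d / (2 * a) by apply: divr_gt0 => //; lra.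
have := H (L - d / (2 * a)) ltac:(lra).
rewrite mulrBl E; rewrite /d; lra.
Qed.


Definition Kf (P : pred 'I_n) (mu : R) (y : 'I_n -> R) :=
  [/\ forall i, 0 <= y i, forall i, ~~ P i -> y i = 0, \sum_i y i = 1 &
      forall i, P i -> mu * y i <= Ax y i].

Definition Kset P mu : set 'rV[R]_n := fun v => Kf P mu (fun i => v ord0 i).

Lemma Kf_feas P mu y : Kf P mu y -> feas P mu y.
Proof.
case=> y0 ys ysum yf; split => //.
case: (pickP [pred k | 0 < y k]) => [k yk|h]; first by exists k.
exfalso; have : \sum_i y i = 0.
  apply: big1 => i _; have := h i; rewrite /= => /negbT; rewrite -leNgt => yi.
  by apply/le_anti; rewrite yi y0.
by rewrite ysum => /eqP; rewrite oner_eq0.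
Qed.

Lemma feas_Kf P mu y : feas P mu y -> Kf P mu (fun i => y i / \sum_k y k).
Proof.
case=> y0 ys [k yk] yf.
have S0 : 0 < \sum_k y k.
  rewrite (bigD1 k) //=; apply: (lt_le_trans yk); rewrite lerDl.
  by apply: sumr_ge0 => i _.
split.
- by move=> i; apply: divr_ge0 => //; exact: ltW.
- by move=> i nPi; rewrite ys // mul0r.
- by rewrite -mulr_suml divff // gt_eqF.
- move=> i Pi; rewrite /Ax.
  have -> : \sum_j (e i j)%:R * (y j / \sum_k y k) =
      (\sum_j (e i j)%:R * y j) / \sum_k y k.
    by rewrite mulr_suml; apply: eq_bigr => j _; rewrite mulrA.
  rewrite mulrA; apply: ler_wpM2r; first by rewrite invr_ge0 ltW.
  exact: yf.
Qed.

Definition Box : set 'rV[R]_n :=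
  [set v | forall i, `[(0:R), 1]%classic (v ord0 i)].

Lemma Box_compact : compact Box.
Proof.
exact: (@rV_compact _ n (fun=> `[(0:R), 1]%classic) (fun=> @segment_compact R 0 1)).
Qed.

Lemma Kset_box P mu v : Kset P mu v -> Box v.
Proof.
case=> v0 vs vsum vf i; rewrite /= in_itv /= v0 /= -vsum (bigD1 i) //= lerDl.
by apply: sumr_ge0 => j _.
Qed.

Lemma Kset_mono P mu mu' v : mu <= mu' -> Kset P mu' v -> Kset P mu v.
Proof.
move=> le [v0 vs vsum vf]; split => // i Pi.
by apply: le_trans (vf i Pi); apply: ler_wpM2r.
Qed.

Lemma Kset_closed P mu : closed (Kset P mu).
Proof.
have -> : Kset P mu =
   (\bigcap_(i in setT) (
      ((fun v : 'rV[R]_n => v ord0 i) @^-1` [set x | 0 <= x]) `&`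
      ((fun v : 'rV[R]_n => if P i then 0 else v ord0 i) @^-1` [set x | x = 0]) `&`
      ((fun v : 'rV[R]_n => if P i then
          \sum_j (e i j)%:R * v ord0 j - mu * v ord0 i else 0)
         @^-1` [set x | 0 <= x]))) `&`
   ((fun v : 'rV[R]_n => \sum_j 1 * v ord0 j) @^-1` [set x | x = 1]).
  apply/seteqP; split => v.
    case=> v0 vs vsum vf; split.
      move=> i _ /=; split; [split|].
      - exact: v0.
      - by case: ifP => // /negbT /vs.
      - by case: ifP => // Pi; rewrite subr_ge0; exact: vf.
    by rewrite /= -[RHS]vsum; apply: eq_bigr => j _; rewrite mul1r.
  move=> [/= H vsum]; split.
  - by move=> i; have [[]] := H i I.
  - by move=> i nPi; have [[_]] := H i I; rewrite (negbTE nPi).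
  - by rewrite -[RHS]vsum; apply: eq_bigr => j _; rewrite mul1r.
  - by move=> i Pi; have [_] := H i I; rewrite Pi /= subr_ge0.
apply: closedI; last first.
  by apply: closed_comp; [move=> v _; exact: cont_lin | exact: closed_eq].
apply: closed_bigI => i _; apply: closedI; first apply: closedI.
- by apply: closed_comp; [move=> v _; exact: coord_continuous | exact: closed_ge].
- apply: closed_comp; last exact: closed_eq.
  move=> v _; case: (P i); [exact: cst_continuous | exact: coord_continuous].
- apply: closed_comp; last exact: closed_ge.
  move=> v _; case: (P i); last exact: cst_continuous.
  have h1 := cont_lin (fun j => (e i j)%:R) v.
  have h2 : {for v, continuous (fun v : 'rV[R]_n => mu * v ord0 i)}.
    apply: continuousM; [exact: cst_continuous | exact: coord_continuous].
  exact: (continuousB h1 h2).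
Qed.


Lemma perron (P : pred 'I_n) : (exists p, P p) -> cutc P ->
  exists lam x, eig P lam x /\ forall mu y, feas P mu y -> mu <= lam.
Proof.
move=> [p Pp] cP.
pose L := [set mu : R | exists v, Kset P mu v].
have LK : forall mu y, feas P mu y -> L mu.
  move=> mu y fy; exists (\row_j (y j / \sum_k y k)); rewrite /Kset /=.
  have -> : (fun i => (\row_j (y j / \sum_k y k)) ord0 i) =
            (fun i => y i / \sum_k y k) by apply/funext => i; rewrite mxE.
  exact: feas_Kf.
have Lub : forall mu, L mu -> mu <= n%:R.
  move=> mu [v [v0 vs vsum vf]].
  have h : forall i, mu * v ord0 i <= \sum_j v ord0 j.
    move=> i; have [Pi|nPi] := boolP (P i).
      apply: le_trans (vf i Pi) _; rewrite /Ax; apply: ler_sum => j _.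
      by case: (e i j); rewrite ?mul1r ?mul0r.
    by rewrite vs // mulr0; apply: sumr_ge0.
  have := @ler_sum _ 'I_n (index_enum 'I_n) xpredT _ _ (fun i _ => h i).
  by rewrite -mulr_sumr vsum mulr1 sumr_const card_ord.
have hs : has_sup L.
  split; last by exists n%:R => mu Lmu; exact: Lub.
  exists 0; apply: (LK 0 (fun i => (i == p)%:R)); split.
  - by move=> i; exact: ler0n.
  - by move=> i nPi; case: eqP => // ip; move: nPi; rewrite ip Pp.
  - by exists p; rewrite eqxx ltr01.
  - by move=> i _; rewrite mul0r; apply: Ax_ge0 => j; exact: ler0n.
set lam := sup L.
have lamub : forall mu, L mu -> mu <= lam by move=> mu Lmu; exact: sup_upper_bound.
have hfin : finI [set mu | mu < lam] (Kset P).
  move=> D' sub.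
  have [m mL mge] := @seq_max lam (enum_fset D') (fun x xD => set_mem (sub x xD)).
  have [mu1 [v Kv] mu1gt] := @sup_adherent R L (lam - m) ltac:(by rewrite subr_gt0) hs.
  exists v => x /= xD; apply: (Kset_mono _ _ _ _ _ Kv).
  by have := mge x xD; rewrite /lam in mu1gt *; lra.
have : \bigcap_(mu in [set mu | mu < lam]) Kset P mu !=set0.
  have := Box_compact; rewrite compact_In0 => /(_ R _ (Kset P)); apply => //.
  exists (Kset P) => [mu _ | mu _]; first exact: Kset_closed.
  apply/seteqP; split => v; last by case.
  by move=> Kv; split => //; exact: Kset_box _ _ _ Kv.
case=> q hq.
have [q0 qs qsum _] : Kset P (lam - 1) q by apply: hq => /=; lra.
have Kq : Kf P lam (fun i => q ord0 i).
  split => // i Pi; apply: lim_le => //; first exact: Ax_ge0.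
  by move=> mu mulam; have [_ _ _] := hq mu mulam; apply.
have fq := Kf_feas _ _ _ Kq.
exists lam, (fun i => q ord0 i); split; last first.
  by move=> mu y fy; apply: lamub; exact: LK fy.
case: fq => fq0 fqs fqk fqf; split => // i Pi.
apply/le_anti; rewrite fqf // andbT leNgt; apply/negP => hlt.
have [mu' mu'gt [y fy]] := @improve R n e P lam _ cP (Kf_feas _ _ _ Kq)
  (ex_intro _ i (introT andP (conj Pi hlt))).
by have := lamub _ (LK _ _ fy); rewrite leNgt mu'gt.
Qed.

End Topo.

Local Close Scope classical_set_scope.
Local Open Scope ring_scope.

Lemma chain (R : realType) n (e : rel 'I_n) (P Q : pred 'I_n) (lamP lamQ : R) x :
  (forall i, P i -> Q i) -> cutc n e Q -> (exists q, Q q && ~~ P q) ->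
  eig R n e P lamP x -> (forall mu z, feas R n e Q mu z -> mu <= lamQ) ->
  lamP < lamQ.
Proof.
move=> PQ cQ hq eP maxQ.
have [fQ hs] := @step_up R n e P Q lamP x PQ cQ hq eP.
have [mu' gt [z fz]] := @improve R n e Q lamP x cQ fQ hs.
exact: lt_le_trans gt (maxQ _ _ fz).
Qed.

Theorem mainTheorem4 (R : realType) (n : nat) (e : rel 'I_n) (r s : nat) :
  irreflexive e ->
  strongly_connected e ->
  (exists l1 l2 l3 : R,
      [/\ l1 != l2, l1 != l3, l2 != l3 &
          forall l : R, compl_eig (adjmx R e) l <-> [\/ l = l1, l = l2 | l = l3]]) ->
  (2 <= r)%N -> (2 <= s)%N ->
  contains_subdigraph (infty_digraph r s) e ->
  n = (r + s - 1)%N.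
Proof.
move=> _ sc [l1 [l2 [l3 [n12 n13 n23 hl]]]] r2 s2 [f [finj fhom]].
have [//|neq] := eqVneq n (r + s - 1)%N.
exfalso.
have o0 : (0 < r + s - 1)%N by lia.
have o1 : (1 < r + s - 1)%N by lia.
have oR : (r < r + s - 1)%N by lia.
pose u0 := Ordinal o0; pose u1 := Ordinal o1; pose ur := Ordinal oR.
pose P0 := pred1 (f u0).
pose P1 := [pred v | [exists u : 'I_(r+s-1), (fun k => (k < r)%N) u && (f u == v)]].
pose P2 := [pred v | [exists u : 'I_(r+s-1), (fun _ => true) u && (f u == v)]].
have c0 : cutc n e P0 := @cut_1 n e (f u0).
have c1 : cutc n e P1 :=
  @cut_img n e r s f (fun k => (k < r)%N) fhom (fun Q => @cyc_closed r s Q r2 s2).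
have c2 : cutc n e P2 :=
  @cut_img n e r s f (fun _ => true) fhom (fun Q => @inf_closed r s Q r2 s2).
have c3 : cutc n e predT := @cut_all n e sc.
have [lam0 [x0 [e0 m0]]] := @perron R n e P0 (ex_intro _ (f u0) (eqxx _)) c0.
have [lam1 [x1 [e1 m1]]] := @perron R n e P1
  (ex_intro _ (f u0) (introT existsP (ex_intro _ u0 (introT andP (conj (ltn_trans (ltnSn 0) r2) (eqxx _)))))) c1.
have ex2 : exists p, P2 p by exists (f u0); apply/existsP; exists u0; rewrite eqxx.
have [lam2 [x2 [e2 m2]]] := @perron R n e P2 ex2 c2.
have [lam3 [x3 [e3 m3]]] := @perron R n e predT (ex_intro _ (f u0) isT) c3.
have h01 : lam0 < lam1.
  apply: (@chain R n e _ _ _ _ _ _ c1 _ e0 m1).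
    move=> i /eqP ->; apply/existsP; exists u0; rewrite eqxx andbT /=; lia.
  exists (f u1); apply/andP; split.
    by apply/existsP; exists u1; rewrite eqxx andbT /=; lia.
  by rewrite /P0 /= (inj_eq finj).
have h12 : lam1 < lam2.
  apply: (@chain R n e _ _ _ _ _ _ c2 _ e1 m2).
    by move=> i /existsP[u /andP[_ fu]]; apply/existsP; exists u.
  exists (f ur); apply/andP; split; first by apply/existsP; exists ur; rewrite eqxx.
  apply/negP => /existsP[u /andP[ur' /eqP /finj fu]].
  by move: ur'; rewrite fu /= ltnn.
have h23 : lam2 < lam3.
  apply: (@chain R n e _ _ _ _ _ _ c3 _ e2 m3) => //.
  case: (pickP [pred v | ~~ P2 v]) => [v nv|h]; first by exists v.
  exfalso; apply/negP: neq; rewrite negbK.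
  have hg : forall v, exists u, f u = v.
    move=> v; have := h v; rewrite /= negbK => /existsP[u /eqP fu].
    by exists u.
  pose g v := odflt u0 [pick u | f u == v].
  have gK : cancel g f.
    move=> v; rewrite /g; case: pickP => [u /eqP //|hh].
    by have [u fu] := hg v; have := hh u; rewrite fu eqxx.
  have := leq_card g (can_inj gK); have := leq_card f finj.
  rewrite !card_ord => a b; apply/eqP; lia.
have v0 := proj1 (hl lam0) (@eig_compl R n e _ _ _ e0).
have v1 := proj1 (hl lam1) (@eig_compl R n e _ _ _ e1).
have v2 := proj1 (hl lam2) (@eig_compl R n e _ _ _ e2).
have v3 := proj1 (hl lam3) (@eig_compl R n e _ _ _ e3).
have h02 := lt_trans h01 h12.
have h03 := lt_trans h02 h23.
have h13 := lt_trans h12 h23.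
case: v0 => E0; case: v1 => E1; case: v2 => E2; case: v3 => E3;
  rewrite ?E0 ?E1 ?E2 ?E3 in h01 h12 h23 h02 h03 h13;
  rewrite ?ltxx in h01 h12 h23 h02 h03 h13; by [].
Qed.
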